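(* For every poset $(S,\le)$, the free $\mathbb{B}$-module $\mathbb{B}(S,\le)$ is flat.
   Context: $\mathbb{B}=\{-\infty,0\}$ is the Boolean semifield (idempotent semiring with $\vee=\max$); $\mathbb{B}$-modules are join-semilattices with least element. $\mathbb{B}(S,\le)$ is the set of lower subsets of $S$ which are downward closures of finite subsets, under union. A $\mathbb{B}$-module $M$ is flat if the functor $-\otimes_{\mathbb{B}}M$ is exact (preserves finite limits and finite colimits). *)

(* Defs.v *)
From Stdlib Require Import List ClassicalEpsilon FunctionalExtensionality
  PropExtensionality ProofIrrelevance.
Import ListNotations.
Set Implicit Arguments.

(* A B-module, B = {-oo,0} the Boolean semifield: the scalar action is forced
   (0.x = x, (-oo).x = bottom), so a B-module is exactly a join-semilattice
   with least element, i.e. a commutative idempotent monoid (M, \/, bot). *)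
Record BMod : Type := {
  bcar :> Type;
  bjoin : bcar -> bcar -> bcar;
  bzero : bcar;
  bjoinA : forall x y z, bjoin x (bjoin y z) = bjoin (bjoin x y) z;
  bjoinC : forall x y, bjoin x y = bjoin y x;
  bjoinI : forall x, bjoin x x = x;
  bjoin0 : forall x, bjoin bzero x = x }.
Arguments bjoin {b} _ _.
Arguments bzero {b}.

Record hom (A B : BMod) := {
  hfun :> A -> B;
  hom_join : forall x y, hfun (bjoin x y) = bjoin (hfun x) (hfun y);
  hom_zero : hfun bzero = bzero }.

Definition hcomp (A B C : BMod) (g : hom B C) (f : hom A B) : hom A C.
Proof.
  refine (@Build_hom A C (fun x => g (f x)) _ _).
  - intros x y; rewrite !hom_join; reflexivity.
  - rewrite !hom_zero; reflexivity.
Defined.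

Definition heq (A B : BMod) (f g : hom A B) : Prop := forall x, f x = g x.

Definition is_terminal (T : BMod) : Prop :=
  forall X : BMod, inhabited (hom X T) /\ forall f g : hom X T, heq f g.

Definition is_initial (I : BMod) : Prop :=
  forall X : BMod, inhabited (hom I X) /\ forall f g : hom I X, heq f g.

Definition is_product (A B P : BMod) (p1 : hom P A) (p2 : hom P B) : Prop :=
  (forall (X : BMod) (f : hom X A) (g : hom X B),
      exists h : hom X P, heq (hcomp p1 h) f /\ heq (hcomp p2 h) g) /\
  (forall (X : BMod) (h h' : hom X P),
      heq (hcomp p1 h) (hcomp p1 h') -> heq (hcomp p2 h) (hcomp p2 h') -> heq h h').

Definition is_coproduct (A B C : BMod) (i1 : hom A C) (i2 : hom B C) : Prop :=
  (forall (X : BMod) (f : hom A X) (g : hom B X),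
      exists h : hom C X, heq (hcomp h i1) f /\ heq (hcomp h i2) g) /\
  (forall (X : BMod) (h h' : hom C X),
      heq (hcomp h i1) (hcomp h' i1) -> heq (hcomp h i2) (hcomp h' i2) -> heq h h').

Definition is_equalizer (E A B : BMod) (f g : hom A B) (e : hom E A) : Prop :=
  heq (hcomp f e) (hcomp g e) /\
  (forall (X : BMod) (x : hom X A), heq (hcomp f x) (hcomp g x) ->
      exists h : hom X E, heq (hcomp e h) x) /\
  (forall (X : BMod) (h h' : hom X E), heq (hcomp e h) (hcomp e h') -> heq h h').

Definition is_coequalizer (A B Q : BMod) (f g : hom A B) (q : hom B Q) : Prop :=
  heq (hcomp q f) (hcomp q g) /\
  (forall (X : BMod) (x : hom B X), heq (hcomp x f) (hcomp x g) ->
      exists h : hom Q X, heq (hcomp h q) x) /\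
  (forall (X : BMod) (h h' : hom Q X), heq (hcomp h q) (hcomp h' q) -> heq h h').

Section Quot.
Variables (X : Type) (R : X -> X -> Prop).
Hypotheses (Rrefl : forall x, R x x) (Rsym : forall x y, R x y -> R y x)
  (Rtrans : forall x y z, R x y -> R y z -> R x z).

Definition quot : Type := {P : X -> Prop | exists x, P = R x}.
Definition cls (x : X) : quot := exist _ (R x) (ex_intro _ x eq_refl).
Definition rep (q : quot) : X :=
  proj1_sig (constructive_indefinite_description _ (proj2_sig q)).

Lemma rep_spec (q : quot) : proj1_sig q = R (rep q).
Proof.
  unfold rep; destruct (constructive_indefinite_description _ _); auto.
Qed.

Lemma cls_rep (q : quot) : cls (rep q) = q.
Proof.
  pose proof (rep_spec q) as H. revert H. generalize (rep q) as r.
  intros r H. destruct q as [P HP]; simpl in *.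
  unfold cls. subst P. f_equal. apply proof_irrelevance.
Qed.

Lemma cls_eq (x y : X) : R x y -> cls x = cls y.
Proof.
  intro Hxy. unfold cls.
  assert (E : R x = R y).
  { apply functional_extensionality; intro z; apply propositional_extensionality;
    split; eauto. }
  generalize (ex_intro (fun w => R x = R w) x eq_refl).
  generalize (ex_intro (fun w => R y = R w) y eq_refl).
  rewrite <- E. intros; f_equal; apply proof_irrelevance.
Qed.

Lemma rep_cls (x : X) : R (rep (cls x)) x.
Proof.
  pose proof (rep_spec (cls x)) as H; simpl in H.
  apply Rsym. rewrite H. apply Rrefl.
Qed.
End Quot.

Section Tensor.
Variables (A M : BMod).

(* the congruence on formal finite joins of pure tensors generated by the
   B-bilinearity relations *)
Inductive teq : list (A * M) -> list (A * M) -> Prop :=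
| teq_refl l : teq l l
| teq_sym l l' : teq l l' -> teq l' l
| teq_trans l l' l'' : teq l l' -> teq l' l'' -> teq l l''
| teq_cat l1 l2 l1' l2' : teq l1 l1' -> teq l2 l2' -> teq (l1 ++ l2) (l1' ++ l2')
| teq_comm l1 l2 : teq (l1 ++ l2) (l2 ++ l1)
| teq_idem l : teq (l ++ l) l
| teq_zl (m : M) : teq [(bzero, m)] []
| teq_zr (a : A) : teq [(a, bzero)] []
| teq_jl (a a' : A) (m : M) : teq [(bjoin a a', m)] [(a, m); (a', m)]
| teq_jr (a : A) (m m' : M) : teq [(a, bjoin m m')] [(a, m); (a, m')].

Definition tcar : Type := quot teq.
Definition tcls := @cls _ teq.
Definition trep := @rep _ teq.
Definition tjoin (x y : tcar) : tcar := tcls (trep x ++ trep y).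
Definition tzero : tcar := tcls [].

Lemma trep_cls l : teq (trep (tcls l)) l.
Proof. exact (rep_cls teq teq_refl teq_sym l). Qed.
Lemma tcls_eq l l' : teq l l' -> tcls l = tcls l'.
Proof. exact (cls_eq teq teq_sym teq_trans l l'). Qed.
Lemma tcls_rep x : tcls (trep x) = x.
Proof. apply cls_rep. Qed.

Lemma tjoinA x y z : tjoin x (tjoin y z) = tjoin (tjoin x y) z.
Proof.
  unfold tjoin. apply tcls_eq.
  eapply teq_trans. apply teq_cat. apply teq_refl. apply trep_cls.
  rewrite app_assoc. apply teq_cat. apply teq_sym, trep_cls. apply teq_refl.
Qed.
Lemma tjoinC x y : tjoin x y = tjoin y x.
Proof. unfold tjoin. apply tcls_eq, teq_comm. Qed.
Lemma tjoinI x : tjoin x x = x.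
Proof. unfold tjoin. rewrite <- (tcls_rep x) at 3. apply tcls_eq, teq_idem. Qed.
Lemma tjoin0 x : tjoin tzero x = x.
Proof.
  unfold tjoin, tzero. rewrite <- (tcls_rep x) at 2. apply tcls_eq.
  change (trep x) with ([] ++ trep x) at 2.
  apply teq_cat. apply trep_cls. apply teq_refl.
Qed.

Definition tensor : BMod := @Build_BMod tcar tjoin tzero tjoinA tjoinC tjoinI tjoin0.
End Tensor.

Section TensorMap.
Variables (A B M : BMod) (f : hom A B).
Let F (p : A * M) : B * M := (f (fst p), snd p).

Lemma teq_map l l' : teq A M l l' -> teq B M (map F l) (map F l').
Proof.
  induction 1; simpl; rewrite ?map_app.
  - apply teq_refl.
  - apply teq_sym; auto.
  - eapply teq_trans; eauto.
  - apply teq_cat; auto.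
  - apply teq_comm.
  - apply teq_idem.
  - unfold F; simpl; rewrite hom_zero; apply teq_zl.
  - apply teq_zr.
  - unfold F; simpl; rewrite hom_join; apply teq_jl.
  - apply teq_jr.
Qed.

Definition tmap_fun (x : tensor A M) : tensor B M := tcls B M (map F (trep x)).

Lemma tmap_join x y :
  tmap_fun (@bjoin (tensor A M) x y) = bjoin (tmap_fun x) (tmap_fun y).
Proof.
  unfold tmap_fun; simpl; unfold tjoin. apply tcls_eq.
  eapply teq_trans. apply teq_map, trep_cls. rewrite map_app.
  apply teq_cat; apply teq_sym, trep_cls.
Qed.

Lemma tmap_zero : tmap_fun bzero = bzero.
Proof.
  unfold tmap_fun; simpl; unfold tzero. apply tcls_eq.
  change (@nil (B * M)) with (map F []). apply teq_map, trep_cls.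
Qed.

Definition tmap : hom (tensor A M) (tensor B M) := @Build_hom (tensor A M) (tensor B M) tmap_fun tmap_join tmap_zero.
End TensorMap.

(** * Flatness: - (x) M is exact (preserves finite limits and finite colimits).
    Finite limits are generated by the terminal object, binary products and
    equalizers; dually for finite colimits. *)
Definition flat (M : BMod) : Prop :=
  (forall T : BMod, is_terminal T -> is_terminal (tensor T M)) /\
  (forall (A B P : BMod) (p1 : hom P A) (p2 : hom P B),
      is_product p1 p2 -> is_product (tmap M p1) (tmap M p2)) /\
  (forall (E A B : BMod) (f g : hom A B) (e : hom E A),
      is_equalizer f g e -> is_equalizer (tmap M f) (tmap M g) (tmap M e)) /\
  (forall I : BMod, is_initial I -> is_initial (tensor I M)) /\
  (forall (A B C : BMod) (i1 : hom A C) (i2 : hom B C),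
      is_coproduct i1 i2 -> is_coproduct (tmap M i1) (tmap M i2)) /\
  (forall (A B Q : BMod) (f g : hom A B) (q : hom B Q),
      is_coequalizer f g q -> is_coequalizer (tmap M f) (tmap M g) (tmap M q)).

Section FreeB.
Variables (S : Type) (le : S -> S -> Prop).

Definition fin_lower (L : S -> Prop) : Prop :=
  exists l : list S, forall x, L x <-> exists y, In y l /\ le x y.

Definition Bcar : Type := {L : S -> Prop | fin_lower L}.

Lemma Bunion_fin (L1 L2 : Bcar) : fin_lower (fun x => proj1_sig L1 x \/ proj1_sig L2 x).
Proof.
  destruct L1 as [L1 [l1 H1]], L2 as [L2 [l2 H2]]; simpl. exists (l1 ++ l2).
  intro x; rewrite H1, H2; split.
  - intros [[y [Hy Hl]] | [y [Hy Hl]]]; exists y; rewrite in_app_iff; auto.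
  - intros [y [Hy Hl]]; apply in_app_iff in Hy as [Hy|Hy]; eauto.
Qed.

Definition Bunion (L1 L2 : Bcar) : Bcar := exist _ _ (Bunion_fin L1 L2).

Lemma Bempty_fin : fin_lower (fun _ => False).
Proof. exists []; intro x; split; [tauto | intros [y [[] _]]]. Qed.

Definition Bempty : Bcar := exist _ _ Bempty_fin.

Lemma Bext (u v : Bcar) : (forall x, proj1_sig u x <-> proj1_sig v x) -> u = v.
Proof.
  destruct u as [u hu], v as [v hv]; simpl; intro H.
  assert (u = v) by (apply functional_extensionality; intro; apply propositional_extensionality; auto).
  subst; f_equal; apply proof_irrelevance.
Qed.

Lemma BunionA x y z : Bunion x (Bunion y z) = Bunion (Bunion x y) z.
Proof. apply Bext; simpl; tauto. Qed.
Lemma BunionC x y : Bunion x y = Bunion y x.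
Proof. apply Bext; simpl; tauto. Qed.
Lemma BunionI x : Bunion x x = x.
Proof. apply Bext; simpl; tauto. Qed.
Lemma Bunion0 x : Bunion Bempty x = x.
Proof. apply Bext; simpl; tauto. Qed.

Definition BFree : BMod := @Build_BMod Bcar Bunion Bempty BunionA BunionC BunionI Bunion0.
End FreeB.

(* Main.v *)
Require Import Defs.
From Stdlib Require Import List ClassicalEpsilon FunctionalExtensionality PropExtensionality ProofIrrelevance.
Import ListNotations.
Set Implicit Arguments.

Definition ble (X : BMod) (x y : X) : Prop := bjoin x y = y.
Arguments ble {X} x y.

Fixpoint bigj (X : BMod) (xs : list X) : X :=
  match xs with [] => bzero | x :: r => bjoin x (@bigj X r) end.
Arguments bigj {X} xs.

Section Lat.
Variable X : BMod.
Lemma bjoin0r (x : X) : bjoin x bzero = x.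
Proof. rewrite bjoinC; apply bjoin0. Qed.
Lemma ble_refl (x : X) : ble x x.
Proof. apply bjoinI. Qed.
Lemma ble_trans (x y z : X) : ble x y -> ble y z -> ble x z.
Proof. unfold ble; intros H1 H2. rewrite <- H2, bjoinA, H1; reflexivity. Qed.
Lemma ble_antisym (x y : X) : ble x y -> ble y x -> x = y.
Proof. unfold ble; intros H1 H2. rewrite <- H2, bjoinC; auto. Qed.
Lemma ble0 (x : X) : ble bzero x.
Proof. apply bjoin0. Qed.
Lemma join_le (x y z : X) : ble x z -> ble y z -> ble (bjoin x y) z.
Proof. unfold ble; intros H1 H2. rewrite <- bjoinA, H2, H1; reflexivity. Qed.
Lemma ble_joinl (x y : X) : ble x (bjoin x y).
Proof. unfold ble. rewrite bjoinA, bjoinI; reflexivity. Qed.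
Lemma ble_joinr (x y : X) : ble y (bjoin x y).
Proof. rewrite bjoinC; apply ble_joinl. Qed.
Lemma join_mono (x y x' y' : X) : ble x x' -> ble y y' -> ble (bjoin x y) (bjoin x' y').
Proof. intros; apply join_le; eapply ble_trans; eauto using ble_joinl, ble_joinr. Qed.
Lemma join_swap (a b c d : X) : bjoin (bjoin a b) (bjoin c d) = bjoin (bjoin a c) (bjoin b d).
Proof. rewrite <- !bjoinA; f_equal; rewrite !bjoinA; f_equal; apply bjoinC. Qed.
Lemma bigj_app (l1 l2 : list X) : bigj (l1 ++ l2) = bjoin (bigj l1) (bigj l2).
Proof. induction l1; simpl. rewrite bjoin0; auto. rewrite IHl1, bjoinA; auto. Qed.
Lemma bigj_le (xs : list X) y : (forall x, In x xs -> ble x y) -> ble (bigj xs) y.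
Proof. induction xs; simpl; intros H. apply ble0. apply join_le; auto. Qed.
Lemma le_bigj (xs : list X) x : In x xs -> ble x (bigj xs).
Proof. induction xs; simpl; intros H; [destruct H|]. destruct H as [H|H]. subst; apply ble_joinl.
  eapply ble_trans; [apply IHxs; auto | apply ble_joinr]. Qed.
Lemma bigj_mono (I : Type) (F G : I -> X) l :
  (forall i, In i l -> ble (F i) (G i)) -> ble (bigj (map F l)) (bigj (map G l)).
Proof. induction l; simpl; intros H. apply ble_refl. apply join_mono; auto. Qed.
Lemma bigj_zero (xs : list X) : (forall x, In x xs -> x = bzero) -> bigj xs = bzero.
Proof. induction xs; simpl; intros H; auto. rewrite (H a), IHxs; auto. apply bjoinI. Qed.
End Lat.

Lemma hom_bigj (A B : BMod) (h : hom A B) xs : h (bigj xs) = bigj (map h xs).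
Proof. induction xs; simpl. apply hom_zero. rewrite hom_join, IHxs; auto. Qed.
Lemma hom_mono (A B : BMod) (h : hom A B) x y : ble x y -> ble (h x) (h y).
Proof. unfold ble; intros H. rewrite <- hom_join, H; auto. Qed.

Lemma hom_ext A B (f g : hom A B) : (forall x, f x = g x) -> f = g.
Proof.
  destruct f as [f fj fz], g as [g gj gz]; simpl; intro H.
  assert (f = g) by (apply functional_extensionality; auto). subst g.
  f_equal; apply proof_irrelevance.
Qed.

Lemma hcompE (A B C : BMod) (g : hom B C) (f : hom A B) x : hcomp g f x = g (f x).
Proof. reflexivity. Qed.

Definition idh (A : BMod) : hom A A := @Build_hom A A (fun x => x) (fun _ _ => eq_refl) eq_refl.
Definition zhom (A B : BMod) : hom A B :=
  @Build_hom A B (fun _ => bzero) (fun _ _ => eq_sym (bjoinI _ _)) eq_refl.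

Section HomMod.
Variables (M X : BMod).
Definition hjoin (f g : hom M X) : hom M X.
Proof.
  refine (@Build_hom M X (fun m => bjoin (f m) (g m)) _ _).
  - intros x y; rewrite !hom_join; apply join_swap.
  - rewrite !hom_zero; apply bjoinI.
Defined.
Lemma hjoinE f g m : hjoin f g m = bjoin (f m) (g m).
Proof. reflexivity. Qed.
Lemma hjA x y z : hjoin x (hjoin y z) = hjoin (hjoin x y) z.
Proof. apply hom_ext; intro; apply bjoinA. Qed.
Lemma hjC x y : hjoin x y = hjoin y x.
Proof. apply hom_ext; intro; apply bjoinC. Qed.
Lemma hjI x : hjoin x x = x.
Proof. apply hom_ext; intro; apply bjoinI. Qed.
Lemma hj0 x : hjoin (zhom M X) x = x.
Proof. apply hom_ext; intro; apply bjoin0. Qed.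
Definition HomM : BMod := @Build_BMod (hom M X) hjoin (zhom M X) hjA hjC hjI hj0.
End HomMod.

Section FunMod.
Variables (S : Type) (A : BMod).
Definition fjoin (f g : S -> A) : S -> A := fun t => bjoin (f t) (g t).
Lemma fjA x y z : fjoin x (fjoin y z) = fjoin (fjoin x y) z.
Proof. apply functional_extensionality; intro; apply bjoinA. Qed.
Lemma fjC x y : fjoin x y = fjoin y x.
Proof. apply functional_extensionality; intro; apply bjoinC. Qed.
Lemma fjI x : fjoin x x = x.
Proof. apply functional_extensionality; intro; apply bjoinI. Qed.
Lemma fj0 x : fjoin (fun _ => bzero) x = x.
Proof. apply functional_extensionality; intro; apply bjoin0. Qed.
Definition FunMod : BMod := @Build_BMod (S -> A) fjoin (fun _ => bzero) fjA fjC fjI fj0.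
Lemma funmod_bigj (fs : list (S -> A)) t : (@bigj FunMod fs) t = bigj (map (fun f => f t) fs).
Proof. induction fs; simpl; auto. unfold fjoin; rewrite IHfs; auto. Qed.
End FunMod.

Section TensorGen.
Variables (A M : BMod).
Definition pt (a : A) (m : M) : tensor A M := tcls A M [(a,m)].

Lemma tjoin_cls l1 l2 : @bjoin (tensor A M) (tcls A M l1) (tcls A M l2) = tcls A M (l1 ++ l2).
Proof. simpl. unfold tjoin. apply tcls_eq. apply teq_cat; apply trep_cls. Qed.

Lemma tcls_list l : tcls A M l = bigj (map (fun p => pt (fst p) (snd p)) l).
Proof.
  induction l as [|[a m] l IH]. reflexivity.
  change (tcls A M ((a,m)::l) = bjoin (pt a m) (bigj (map (fun p => pt (fst p) (snd p)) l))).
  rewrite <- IH. unfold pt. rewrite tjoin_cls. reflexivity.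
Qed.

Lemma tensor_elim (x : tensor A M) : x = bigj (map (fun p => pt (fst p) (snd p)) (trep x)).
Proof. rewrite <- tcls_list. symmetry; apply tcls_rep. Qed.

Lemma hom_tensor_ext X (h1 h2 : hom (tensor A M) X) :
  (forall a m, h1 (pt a m) = h2 (pt a m)) -> forall x, h1 x = h2 x.
Proof.
  intros H x. rewrite (tensor_elim x), !hom_bigj, !map_map. f_equal. apply map_ext; auto.
Qed.

Lemma pt_joinl a a' m : pt (bjoin a a') m = bjoin (pt a m) (pt a' m).
Proof. unfold pt; rewrite tjoin_cls. apply tcls_eq; simpl; apply teq_jl. Qed.
Lemma pt_joinr a m m' : pt a (bjoin m m') = bjoin (pt a m) (pt a m').
Proof. unfold pt; rewrite tjoin_cls. apply tcls_eq; simpl; apply teq_jr. Qed.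
Lemma pt_zl m : pt bzero m = bzero.
Proof. unfold pt. apply (tcls_eq (teq_zl A M m)). Qed.
Lemma pt_zr a : pt a bzero = bzero.
Proof. unfold pt. apply (tcls_eq (teq_zr A M a)). Qed.

Definition ptl (m : M) : hom A (tensor A M) :=
  @Build_hom A (tensor A M) (fun a => pt a m) (fun a a' => pt_joinl a a' m) (pt_zl m).
Definition ptr (a : A) : hom M (tensor A M) :=
  @Build_hom M (tensor A M) (fun m => pt a m) (fun m m' => pt_joinr a m m') (pt_zr a).

Lemma pt_bigjl xs m : pt (bigj xs) m = bigj (map (fun a => pt a m) xs).
Proof. exact (hom_bigj (ptl m) xs). Qed.
Lemma pt_bigjr a xs : pt a (bigj xs) = bigj (map (fun m => pt a m) xs).
Proof. exact (hom_bigj (ptr a) xs). Qed.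
Lemma pt_mono_l a a' m : ble a a' -> ble (pt a m) (pt a' m).
Proof. exact (@hom_mono _ _ (ptl m) a a'). Qed.
Lemma pt_mono_r a m m' : ble m m' -> ble (pt a m) (pt a m').
Proof. exact (@hom_mono _ _ (ptr a) m m'). Qed.

Section Curry.
Variable X : BMod.
Definition curry_in (h : hom (tensor A M) X) (a : A) : hom M X.
Proof.
  refine (@Build_hom M X (fun m => h (pt a m)) _ _).
  - intros; rewrite pt_joinr, hom_join; auto.
  - rewrite pt_zr, hom_zero; auto.
Defined.
Definition curry (h : hom (tensor A M) X) : hom A (HomM M X).
Proof.
  refine (@Build_hom A (HomM M X) (curry_in h) _ _).
  - intros; apply hom_ext; intro m; simpl. rewrite pt_joinl, hom_join; auto.
  - apply hom_ext; intro m; simpl. rewrite pt_zl, hom_zero; auto.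
Defined.
Lemma curryE h a m : @hfun M X (curry h a) m = h (pt a m).
Proof. reflexivity. Qed.

Variable k : hom A (HomM M X).
Definition evalL (l : list (A * M)) : X := bigj (map (fun p => @hfun M X (k (fst p)) (snd p)) l).
Lemma evalL_app l1 l2 : evalL (l1 ++ l2) = bjoin (evalL l1) (evalL l2).
Proof. unfold evalL; rewrite map_app, bigj_app; auto. Qed.
Lemma teq_eval l l' : teq A M l l' -> evalL l = evalL l'.
Proof.
  induction 1; rewrite ?evalL_app.
  - auto.
  - auto.
  - congruence.
  - congruence.
  - apply bjoinC.
  - apply bjoinI.
  - unfold evalL; simpl. rewrite (hom_zero k). simpl. apply bjoinI.
  - unfold evalL; simpl. rewrite (hom_zero (k a)). apply bjoinI.
  - unfold evalL; simpl. rewrite (hom_join k). simpl. rewrite !bjoin0r; auto.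
  - unfold evalL; simpl. rewrite (hom_join (k a)). rewrite !bjoin0r; auto.
Qed.
Definition uncur_fun (x : tensor A M) : X := evalL (trep x).
Lemma uncur_join x y : uncur_fun (bjoin x y) = bjoin (uncur_fun x) (uncur_fun y).
Proof. unfold uncur_fun; simpl; unfold tjoin. rewrite (teq_eval (trep_cls A M _)), evalL_app; auto. Qed.
Lemma uncur_zero : uncur_fun bzero = bzero.
Proof. unfold uncur_fun; simpl; unfold tzero. rewrite (teq_eval (trep_cls A M _)); auto. Qed.
Definition uncur : hom (tensor A M) X := @Build_hom (tensor A M) X uncur_fun uncur_join uncur_zero.
Lemma uncur_pt a m : uncur (pt a m) = @hfun M X (k a) m.
Proof. simpl; unfold uncur_fun, pt. rewrite (teq_eval (trep_cls A M _)). unfold evalL; simpl; apply bjoin0r. Qed.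
Lemma uncurE x : uncur x = evalL (trep x).
Proof. reflexivity. Qed.
End Curry.
End TensorGen.

Arguments pt {A M} a m.
Arguments ptl {A M} m.
Arguments ptr {A M} a.
Arguments curry {A M X} h.
Arguments uncur {A M X} k.
Arguments hom_tensor_ext {A M X} h1 h2 _ x.

Lemma tmap_pt (A B M : BMod) (f : hom A B) a m : tmap M f (pt a m) = pt (f a) m.
Proof.
  simpl; unfold tmap_fun, pt. apply tcls_eq. exact (teq_map f (trep_cls A M [(a,m)])).
Qed.

Lemma trivial_terminal (Z : BMod) : (forall x : Z, x = bzero) -> is_terminal Z.
Proof.
  intros H X; split. constructor; exact (zhom X Z).
  intros f g x; rewrite (H (f x)), (H (g x)); auto.
Qed.
Lemma trivial_initial (Z : BMod) : (forall x : Z, x = bzero) -> is_initial Z.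
Proof.
  intros H X; split. constructor; exact (zhom Z X).
  intros f g x; rewrite (H x), !hom_zero; auto.
Qed.
Lemma tensor_trivial (T M : BMod) : (forall x : T, x = bzero) -> forall z : tensor T M, z = bzero.
Proof.
  intros H z. rewrite (tensor_elim z). apply bigj_zero.
  intros x Hx. apply in_map_iff in Hx as [[a m] [<- _]]. simpl. rewrite (H a). apply pt_zl.
Qed.

Section Colim.
Variable M : BMod.

Lemma terminal_pres (T : BMod) : is_terminal T -> is_terminal (tensor T M).
Proof.
  intros HT. apply trivial_terminal, tensor_trivial.
  intro x. exact (proj2 (HT T) (idh T) (zhom T T) x).
Qed.
Lemma initial_pres (T : BMod) : is_initial T -> is_initial (tensor T M).
Proof.
  intros HT. apply trivial_initial, tensor_trivial.
  intro x. exact (proj2 (HT T) (idh T) (zhom T T) x).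
Qed.

Lemma curry_heq (A X : BMod) (h h' : hom (tensor A M) X) :
  heq (curry h) (curry h') -> heq h h'.
Proof.
  intros H. intro zz; apply hom_tensor_ext; clear zz; intros a m.
  exact (f_equal (fun φ : hom M X => φ m) (H a)).
Qed.

Lemma coprod_pres (A B C : BMod) (i1 : hom A C) (i2 : hom B C) :
  is_coproduct i1 i2 -> is_coproduct (tmap M i1) (tmap M i2).
Proof.
  intros [Hex Hun]; split.
  - intros X f g. destruct (Hex (HomM M X) (curry f) (curry g)) as [k [Hk1 Hk2]].
    exists (uncur k); split; intro zz; apply hom_tensor_ext; clear zz; intros a m; rewrite hcompE, tmap_pt, uncur_pt.
    + exact (f_equal (fun φ : hom M X => φ m) (Hk1 a)).
    + exact (f_equal (fun φ : hom M X => φ m) (Hk2 a)).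
  - intros X h h' H1 H2. apply curry_heq. apply (Hun (HomM M X)); intro a; apply hom_ext; intro m.
    + pose proof (H1 (pt a m)) as E; rewrite !hcompE, tmap_pt in E; exact E.
    + pose proof (H2 (pt a m)) as E; rewrite !hcompE, tmap_pt in E; exact E.
Qed.

Lemma coeq_pres (A B Q : BMod) (f g : hom A B) (q : hom B Q) :
  is_coequalizer f g q -> is_coequalizer (tmap M f) (tmap M g) (tmap M q).
Proof.
  intros [H0 [Hex Hun]]; split; [|split].
  - intro zz; apply hom_tensor_ext; clear zz; intros a m; rewrite !hcompE, !tmap_pt.
    pose proof (H0 a) as E; rewrite !hcompE in E; rewrite E; auto.
  - intros X x Hx. destruct (Hex (HomM M X) (curry x)) as [k Hk].
    + intro a; apply hom_ext; intro m.
      pose proof (Hx (pt a m)) as E; rewrite !hcompE, !tmap_pt in E; exact E.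
    + exists (uncur k). intro zz; apply hom_tensor_ext; clear zz; intros b m; rewrite hcompE, tmap_pt, uncur_pt.
      exact (f_equal (fun φ : hom M X => φ m) (Hk b)).
  - intros X h h' H1. apply curry_heq. apply (Hun (HomM M X)); intro a; apply hom_ext; intro m.
    pose proof (H1 (pt a m)) as E; rewrite !hcompE, tmap_pt in E; exact E.
Qed.

Lemma prod_pres (A B P : BMod) (p1 : hom P A) (p2 : hom P B) :
  is_product p1 p2 -> is_product (tmap M p1) (tmap M p2).
Proof.
  intros [Hex Hun].
  destruct (Hex A (idh A) (zhom A B)) as [i1 [E11 E12]].
  destruct (Hex B (zhom B A) (idh B)) as [i2 [E21 E22]].
  assert (Dec : forall x, bjoin (i1 (p1 x)) (i2 (p2 x)) = x).
  { intro x. apply (Hun P (hjoin (hcomp i1 p1) (hcomp i2 p2)) (idh P)); intro y;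
    rewrite !hcompE, hjoinE, hom_join, !hcompE; simpl.
    - pose proof (E11 (p1 y)) as F1; pose proof (E21 (p2 y)) as F2; simpl in F1, F2.
      rewrite F1, F2; apply bjoin0r.
    - pose proof (E12 (p1 y)) as F1; pose proof (E22 (p2 y)) as F2; simpl in F1, F2.
      rewrite F1, F2; apply bjoin0. }
  assert (T11 : forall z, tmap M p1 (tmap M i1 z) = z).
  { apply (hom_tensor_ext (hcomp (tmap M p1) (tmap M i1)) (idh _)); intros a m.
    rewrite hcompE, !tmap_pt, (E11 a : p1 (i1 a) = a); reflexivity. }
  assert (T12 : forall z, tmap M p2 (tmap M i1 z) = bzero).
  { apply (hom_tensor_ext (hcomp (tmap M p2) (tmap M i1)) (zhom _ _)); intros a m.
    rewrite hcompE, !tmap_pt, (E12 a : p2 (i1 a) = bzero); apply pt_zl. }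
  assert (T21 : forall z, tmap M p1 (tmap M i2 z) = bzero).
  { apply (hom_tensor_ext (hcomp (tmap M p1) (tmap M i2)) (zhom _ _)); intros a m.
    rewrite hcompE, !tmap_pt, (E21 a : p1 (i2 a) = bzero); apply pt_zl. }
  assert (T22 : forall z, tmap M p2 (tmap M i2 z) = z).
  { apply (hom_tensor_ext (hcomp (tmap M p2) (tmap M i2)) (idh _)); intros a m.
    rewrite hcompE, !tmap_pt, (E22 a : p2 (i2 a) = a); reflexivity. }
  assert (TD : forall w, bjoin (tmap M i1 (tmap M p1 w)) (tmap M i2 (tmap M p2 w)) = w).
  { apply (hom_tensor_ext (hjoin (hcomp (tmap M i1) (tmap M p1)) (hcomp (tmap M i2) (tmap M p2))) (idh _)).
    intros x m. rewrite hjoinE, !hcompE, !tmap_pt, <- pt_joinl, Dec; reflexivity. }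
  split.
  - intros X f g. exists (hjoin (hcomp (tmap M i1) f) (hcomp (tmap M i2) g)); split; intro x;
    rewrite !hcompE, hjoinE, hom_join, !hcompE.
    + rewrite T11, T21; apply bjoin0r.
    + rewrite T12, T22; apply bjoin0.
  - intros X h h' H1 H2 x. rewrite <- (TD (h x)), <- (TD (h' x)).
    pose proof (H1 x) as F1; pose proof (H2 x) as F2; rewrite !hcompE in F1, F2.
    rewrite F1, F2; reflexivity.
Qed.
End Colim.

Lemma BoolA (x y z : bool) : orb x (orb y z) = orb (orb x y) z.
Proof. destruct x, y, z; reflexivity. Qed.
Lemma BoolC (x y : bool) : orb x y = orb y x.
Proof. destruct x, y; reflexivity. Qed.
Lemma BoolI (x : bool) : orb x x = x.
Proof. destruct x; reflexivity. Qed.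
Lemma Bool0 (x : bool) : orb false x = x.
Proof. reflexivity. Qed.
Definition BoolM : BMod := @Build_BMod bool orb false BoolA BoolC BoolI Bool0.

Definition sel (Y : BMod) (y : Y) : hom BoolM Y.
Proof.
  refine (@Build_hom BoolM Y (fun b : bool => if b then y else bzero) _ _).
  - intros [|] [|]; simpl. symmetry; apply bjoinI. symmetry; apply bjoin0r.
    symmetry; apply bjoin0. symmetry; apply bjoinI.
  - reflexivity.
Defined.

Section Eq.
Variables (E A B : BMod) (f g : hom A B) (e : hom E A).
Hypothesis H : is_equalizer f g e.
Lemma e_inj x y : e x = e y -> x = y.
Proof.
  intro Hxy. destruct H as [_ [_ Hun]].
  refine (Hun BoolM (sel E x) (sel E y) _ true).
  intros [|]; simpl; auto.
Qed.
Lemma e_surj a : f a = g a -> exists x, e x = a.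
Proof.
  intro Ha. destruct H as [_ [Hex _]].
  destruct (Hex BoolM (sel A a)) as [h Hh].
  - intros [|]; simpl; auto. rewrite !hom_zero; auto.
  - exists (h true). exact (Hh true).
Qed.
End Eq.

Section Free.
Variables (S : Type) (le : S -> S -> Prop).
Hypotheses (le_refl : forall x, le x x) (le_trans : forall x y z, le x y -> le y z -> le x z).
Local Notation MM := (BFree le).

Definition down (s : S) : MM.
Proof.
  refine (exist _ (fun x => le x s) _).
  exists [s]; intro x; split.
  - intro h; exists s; simpl; auto.
  - intros [y [[<-|[]] h]]; auto.
Defined.

Definition gens (L : MM) : list S :=
  proj1_sig (constructive_indefinite_description _ (proj2_sig L)).
Lemma gens_spec (L : MM) x : proj1_sig L x <-> exists y, In y (gens L) /\ le x y.
Proof. unfold gens. destruct (constructive_indefinite_description _ _); simpl; auto. Qed.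
Lemma lower (L : MM) x y : proj1_sig L y -> le x y -> proj1_sig L x.
Proof. intros h1 h2. apply gens_spec in h1 as [z [Hz Hyz]]. apply gens_spec; eauto. Qed.
Lemma down_sub (L : MM) s : proj1_sig L s -> ble (down s) L.
Proof.
  intro h. apply Bext; simpl. intro x; split; [intros [h'|h']; eauto using lower | auto].
Qed.
Lemma bigj_down ys x : proj1_sig (@bigj MM (map down ys)) x <-> exists y, In y ys /\ le x y.
Proof.
  induction ys as [|y ys IH]; simpl. split; [tauto| intros [_ [[] _]]].
  rewrite IH. split.
  - intros [h|[z [h1 h2]]]; eauto.
  - intros [z [[<-|h1] h2]]; eauto.
Qed.
Lemma L_decomp (L : MM) : L = @bigj MM (map down (gens L)).
Proof. apply Bext; intro x. rewrite bigj_down, gens_spec; tauto. Qed.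

Section Phi.
Variable A : BMod.
Definition chif (a : A) (L : MM) : S -> A :=
  fun t => if excluded_middle_informative (proj1_sig L t) then a else bzero.

Definition chi_in (a : A) : hom MM (FunMod S A).
Proof.
  refine (@Build_hom MM (FunMod S A) (chif a) _ _).
  - intros L1 L2; apply functional_extensionality; intro t; unfold chif; simpl; unfold fjoin.
    destruct (excluded_middle_informative (proj1_sig L1 t \/ proj1_sig L2 t));
    destruct (excluded_middle_informative (proj1_sig L1 t));
    destruct (excluded_middle_informative (proj1_sig L2 t)); try tauto;
    first [rewrite bjoinI | rewrite bjoin0 | rewrite bjoin0r]; reflexivity.
  - apply functional_extensionality; intro t; unfold chif; simpl.
    destruct (excluded_middle_informative False); tauto.
Defined.

Definition chi : hom A (HomM MM (FunMod S A)).
Proof.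
  refine (@Build_hom A (HomM MM (FunMod S A)) chi_in _ _).
  - intros a a'; apply hom_ext; intro L; apply functional_extensionality; intro t.
    simpl; unfold fjoin, chif. destruct (excluded_middle_informative (proj1_sig L t)); auto.
    symmetry; apply bjoinI.
  - apply hom_ext; intro L; apply functional_extensionality; intro t.
    simpl; unfold chif. destruct (excluded_middle_informative (proj1_sig L t)); auto.
Defined.

Definition Phi : hom (tensor A MM) (FunMod S A) := uncur chi.

Lemma PhiE z t : Phi z t = bigj (map (fun p => chif (fst p) (snd p) t) (trep z)).
Proof.
  unfold Phi. rewrite uncurE. unfold evalL. rewrite funmod_bigj, map_map. reflexivity.
Qed.

Definition pts (z : tensor A MM) : list S := flat_map (fun p => gens (snd p)) (trep z).

Lemma decomp (z : tensor A MM) P : (forall y, In y (pts z) -> In y P) ->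
  z = bigj (map (fun s => pt (Phi z s) (down s)) P).
Proof.
  intro HP. apply ble_antisym.
  - assert (G : ble (bigj (map (fun p => pt (fst p) (snd p)) (trep z)))
                    (bigj (map (fun s => pt (Phi z s) (down s)) P))).
    { apply bigj_le; intros x Hx. apply in_map_iff in Hx as [[a L] [<- Hin]]; simpl.
      rewrite (L_decomp L) at 1. rewrite pt_bigjr, map_map.
      apply bigj_le; intros x Hx. apply in_map_iff in Hx as [y [<- Hy]].
      apply ble_trans with (pt (Phi z y) (down y)).
      - apply pt_mono_l. rewrite PhiE.
        assert (EE : chif a L y = a).
        { unfold chif; destruct (excluded_middle_informative (proj1_sig L y)); auto.
          exfalso; apply n, gens_spec; eauto. }
        rewrite <- EE at 1. apply le_bigj, in_map_iff. exists (a, L); auto.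
      - apply le_bigj, in_map_iff. exists y; split; auto. apply HP.
        unfold pts. apply in_flat_map. exists (a, L); auto. }
    rewrite <- (tensor_elim z) in G. exact G.
  - apply bigj_le; intros x Hx. apply in_map_iff in Hx as [s [<- _]].
    rewrite PhiE, pt_bigjl, map_map.
    assert (G : forall l, ble (bigj (map (fun p => pt (chif (fst p) (snd p) s) (down s)) l))
                              (bigj (map (fun p => pt (fst p) (snd p)) l))).
    { intro l. apply bigj_mono. intros [a L] _; simpl. unfold chif.
      destruct (excluded_middle_informative (proj1_sig L s)) as [h|h].
      - apply pt_mono_r, down_sub, h.
      - rewrite pt_zl; apply ble0. }
    pose proof (G (trep z)) as G'. rewrite <- (tensor_elim z) in G'. exact G'.
Qed.

Lemma Phi_inj z z' : (forall t, Phi z t = Phi z' t) -> z = z'.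
Proof.
  intro Ht. set (P := pts z ++ pts z').
  etransitivity; [apply (decomp z P); intros; apply in_or_app; auto|].
  etransitivity; [|symmetry; apply (decomp z' P); intros; apply in_or_app; auto].
  f_equal. apply map_ext; intro s; rewrite Ht; reflexivity.
Qed.
End Phi.
Arguments chif {A} a L _.
Arguments pts {A} z.

Lemma Phi_pt (A : BMod) a L t : Phi A (pt a L) t = chif a L t.
Proof. unfold Phi; rewrite uncur_pt; reflexivity. Qed.

Definition postc (E A : BMod) (e : hom E A) : hom (FunMod S E) (FunMod S A).
Proof.
  refine (@Build_hom (FunMod S E) (FunMod S A) (fun φ t => e (φ t)) _ _).
  - intros x y; apply functional_extensionality; intro t; simpl; unfold fjoin; apply hom_join.
  - apply functional_extensionality; intro t; simpl; apply hom_zero.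
Defined.

Lemma Phi_nat (E A : BMod) (e : hom E A) z t : Phi A (tmap MM e z) t = e (Phi E z t).
Proof.
  revert z t.
  assert (Hc : forall z, Phi A (tmap MM e z) = (fun t => e (Phi E z t))).
  { refine (hom_tensor_ext (hcomp (Phi A) (tmap MM e)) (hcomp (postc e) (Phi E)) _).
    intros a L. rewrite !hcompE, tmap_pt.
    apply functional_extensionality; intro u. rewrite Phi_pt.
    change (chif (e a) L u = e (Phi E (pt a L) u)). rewrite Phi_pt.
    unfold chif; destruct (excluded_middle_informative (proj1_sig L u)); auto.
    symmetry; apply hom_zero. }
  intros z t. rewrite Hc; reflexivity.
Qed.

Lemma eq_pres (E A B : BMod) (f g : hom A B) (e : hom E A) :
  is_equalizer f g e -> is_equalizer (tmap MM f) (tmap MM g) (tmap MM e).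
Proof.
  intro H.
  assert (Tinj : forall z z', tmap MM e z = tmap MM e z' -> z = z').
  { intros z z' Hz. apply Phi_inj; intro t. apply (e_inj H).
    rewrite <- !Phi_nat, Hz; reflexivity. }
  assert (Tsurj : forall z, tmap MM f z = tmap MM g z -> exists w, tmap MM e w = z).
  { intros z Hz.
    assert (fg : forall t, exists x, e x = Phi A z t).
    { intro t. apply (e_surj H). rewrite <- !Phi_nat, Hz; reflexivity. }
    set (eps t := proj1_sig (constructive_indefinite_description _ (fg t))).
    exists (bigj (map (fun s => pt (eps s) (down s)) (pts z))).
    rewrite hom_bigj, map_map. symmetry. etransitivity; [apply (decomp z (pts z)); auto|].
    f_equal. apply map_ext; intro s. rewrite tmap_pt. f_equal. unfold eps.
    destruct (constructive_indefinite_description _ _); simpl; auto. }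
  split; [|split].
  - intro zz; apply hom_tensor_ext; clear zz; intros a m. rewrite !hcompE, !tmap_pt.
    pose proof (proj1 H a) as E0; rewrite !hcompE in E0; rewrite E0; reflexivity.
  - intros X x Hx.
    assert (Hp : forall ξ, exists w, tmap MM e w = x ξ).
    { intro ξ; apply Tsurj. exact (Hx ξ). }
    set (hf ξ := proj1_sig (constructive_indefinite_description _ (Hp ξ))).
    assert (Hs : forall ξ, tmap MM e (hf ξ) = x ξ).
    { intro ξ; unfold hf; destruct (constructive_indefinite_description _ _); auto. }
    unshelve eexists (@Build_hom X (tensor E MM) hf _ _).
    + intros ξ ξ'. apply Tinj. rewrite hom_join, !Hs, hom_join; reflexivity.
    + apply Tinj. rewrite Hs, !hom_zero; reflexivity.
    + intro ξ; rewrite hcompE; apply Hs.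
  - intros X h h' Hh x. apply Tinj. exact (Hh x).
Qed.
End Free.

Theorem mainTheorem10 (S : Type) (le : S -> S -> Prop)
  (le_refl : forall x, le x x)
  (le_antisym : forall x y, le x y -> le y x -> x = y)
  (le_trans : forall x y z, le x y -> le y z -> le x z) :
  flat (BFree le).
Proof.
  split; [apply terminal_pres|]. split; [apply prod_pres|].
  split; [apply (@eq_pres S le le_refl le_trans)|]. split; [apply initial_pres|].
  split; [apply coprod_pres| apply coeq_pres].
Qed.
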